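(* Let $G$ be a cubical $\omega$-category with connections and $n\ge1$. Let $\Phi_n:\square G_{n-1}\to\square G_{n-1}$ be $\Phi_n=\psi_1(\psi_2\psi_1)(\psi_3\psi_2\psi_1)\cdots(\psi_{n-1}\cdots\psi_1)$, with $\psi_j$ acting on shells as described in the context. Then $x\mapsto(\partial x,\Phi_nx)$ is a bijection from $G_n$ to the pull-back $\{(z,y)\in\square G_{n-1}\times\Phi_n(G_n):\Phi_nz=\partial y\}$.
   Context: A cubical $\omega$-category with connections $G$ consists of sets $G_n$ ($n\ge0$), face maps $\partial^\alpha_i:G_n\to G_{n-1}$, degeneracies $\varepsilon_i:G_{n-1}\to G_n$, connections $\Gamma^\alpha_i:G_n\to G_{n+1}$ ($1\le i\le n$, $\alpha=\pm$) and partial compositions $\circ_j$ on $G_n$ ($1\le j\le n$, $a\circ_jb$ defined iff $\partial^+_ja=\partial^-_jb$) satisfying: $\partial^\alpha_i\partial^\beta_j=\partial^\beta_{j-1}\partial^\alpha_i$ ($i<j$), $\varepsilon_i\varepsilon_j=\varepsilon_{j+1}\varepsilon_i$ ($i\le j$), $\partial^\alpha_i\varepsilon_j=\varepsilon_{j-1}\partial^\alpha_i$ ($i<j$), $\varepsilon_j\partial^\alpha_{i-1}$ ($i>j$), $\mathrm{id}$ ($i=j$); $\Gamma^\alpha_i\Gamma^\beta_j=\Gamma^\beta_{j+1}\Gamma^\alpha_i$ ($i<j$), $\Gamma^\alpha_i\Gamma^\alpha_i=\Gamma^\alpha_{i+1}\Gamma^\alpha_i$, $\Gamma^\alpha_i\varepsilon_j=\varepsilon_{j+1}\Gamma^\alpha_i$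 ($i<j$), $\varepsilon_j\Gamma^\alpha_{i-1}$ ($i>j$), $\Gamma^\alpha_j\varepsilon_j=\varepsilon_{j+1}\varepsilon_j$, $\partial^\alpha_i\Gamma^\beta_j=\Gamma^\beta_{j-1}\partial^\alpha_i$ ($i<j$), $\Gamma^\beta_j\partial^\alpha_{i-1}$ ($i>j+1$), $\partial^\alpha_j\Gamma^\alpha_j=\partial^\alpha_{j+1}\Gamma^\alpha_j=\mathrm{id}$, $\partial^\alpha_j\Gamma^{-\alpha}_j=\partial^\alpha_{j+1}\Gamma^{-\alpha}_j=\varepsilon_j\partial^\alpha_j$; $\partial^-_j(a\circ_jb)=\partial^-_ja$, $\partial^+_j(a\circ_jb)=\partial^+_jb$, $\partial^\alpha_i(a\circ_jb)=\partial^\alpha_ia\circ_{j-1}\partial^\alpha_ib$ ($i<j$), $\partial^\alpha_ia\circ_j\partial^\alpha_ib$ ($i>j$); interchange $(a\circ_ib)\circ_j(c\circ_id)=(a\circ_jc)\circ_i(b\circ_jd)$ for $i\ne j$; $\varepsilon_i(a\circ_jb)=\varepsilon_ia\circ_{j+1}\varepsilon_ib$ ($i\le j$), $\varepsilon_ia\circ_j\varepsilon_ib$ ($i>j$); $\Gamma^\alpha_i(a\circ_jb)=\Gamma^\alpha_ia\circ_{j+1}\Gamma^\alpha_ib$ ($i<j$), $\Gamma^\alpha_ia\circ_j\Gamma^\alpha_ib$ ($i>j$); $\Gamma^+_j(a\circ_jb)=(\Gamma^+_ja\circ_j\varepsilon_ja)\circ_{j+1}(\varepsilon_{j+1}a\circ_j\Gamma^+_jb)$,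 $\Gamma^-_j(a\circ_jb)=(\Gamma^-_ja\circ_j\varepsilon_{j+1}b)\circ_{j+1}(\varepsilon_jb\circ_j\Gamma^-_jb)$; each $\circ_j$ is a category structure with identities $\varepsilon_jy$; $\Gamma^+_ix\circ_i\Gamma^-_ix=\varepsilon_{i+1}x$, $\Gamma^+_ix\circ_{i+1}\Gamma^-_ix=\varepsilon_ix$. Folding operations on $G_m$: $\psi_ix=\Gamma^+_i\partial^-_{i+1}x\circ_{i+1}x\circ_{i+1}\Gamma^-_i\partial^+_{i+1}x$ ($1\le i\le m-1$), $\Psi_r=\psi_{r-1}\cdots\psi_1$, $\Phi_n=\Psi_1\Psi_2\cdots\Psi_n$. An $n$-shell is a $2n$-tuple $z=(z^-_1,z^+_1,\dots,z^-_n,z^+_n)$ of elements of $G_{n-1}$ with $\partial^\alpha_iz^\beta_j=\partial^\beta_{j-1}z^\alpha_i$ for $i<j$; $\square G_{n-1}$ is the set of $n$-shells, and $\partial:G_n\to\square G_{n-1}$ is $\partial x=(\partial^-_1x,\partial^+_1x,\dots,\partial^-_nx,\partial^+_nx)$. For $1\le j\le n-1$ the map $\psi_j:\square G_{n-1}\to\square G_{n-1}$ sends $z$ to $w$ with $w^\alpha_i=\psi_{j-1}z^\alpha_i$ ($i<j$), $w^-_j=z^-_j\circ_jz^+_{j+1}$, $w^+_j=z^-_{j+1}\circ_jz^+_j$, $w^\alpha_{j+1}=\varepsilon_j\partial^\alpha_jz^\alpha_{j+1}$, $w^\alpha_i=\psi_jz^\alpha_i$ ($i>j+1$); this is a well-defined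 map of shells satisfying $\psi_j\partial=\partial\psi_j$. *)

(* Defs.v *)
From mathcomp Require Import ssreflect ssrfun ssrbool eqtype ssrnat.


(* Conventions:
   - cell n    = G_n
   - face n i a : G_{n+1} -> G_n   is  \partial^a_i  (a = true for +, false for -)
   - degen n i  : G_n -> G_{n+1}   is  \varepsilon_i
   - conn n i a : G_n -> G_{n+1}   is  \Gamma^a_i
   - comp n j a b : G_n             is  a \circ_j b  (total function; only
     meaningful when defined, i.e. when face _ j true a = face _ j false b;
     all axioms about composites assume definedness).
   Indices are 1-based natural numbers; the axioms are only imposed for
   indices in the ranges given in the paper. *)

Record cubcat := CubCat {
  cell : nat -> Type;
  face : forall n, nat -> bool -> cell n.+1 -> cell n;
  degen : forall n, nat -> cell n -> cell n.+1;
  conn : forall n, nat -> bool -> cell n -> cell n.+1;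
  comp : forall n, nat -> cell n -> cell n -> cell n;

  ax_ff : forall n i j a b (x : cell n.+2), 1 <= i -> i < j -> j <= n.+2 ->
    face n i a (face n.+1 j b x) = face n j.-1 b (face n.+1 i a x);
  ax_ee : forall n i j (x : cell n), 1 <= i -> i <= j -> j <= n.+1 ->
    degen n.+1 i (degen n j x) = degen n.+1 j.+1 (degen n i x);
  ax_fe_lt : forall n i j a (x : cell n.+1), 1 <= i -> i < j -> j <= n.+2 ->
    face n.+1 i a (degen n.+1 j x) = degen n j.-1 (face n i a x);
  ax_fe_gt : forall n i j a (x : cell n.+1), 1 <= j -> j < i -> i <= n.+2 ->
    face n.+1 i a (degen n.+1 j x) = degen n j (face n i.-1 a x);
  ax_fe_eq : forall n j a (x : cell n), 1 <= j <= n.+1 ->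
    face n j a (degen n j x) = x;

  ax_cc_lt : forall n i j a b (x : cell n), 1 <= i -> i < j -> j <= n ->
    conn n.+1 i a (conn n j b x) = conn n.+1 j.+1 b (conn n i a x);
  ax_cc_eq : forall n i a (x : cell n), 1 <= i <= n ->
    conn n.+1 i a (conn n i a x) = conn n.+1 i.+1 a (conn n i a x);
  ax_ce_lt : forall n i j a (x : cell n), 1 <= i -> i < j -> j <= n.+1 ->
    conn n.+1 i a (degen n j x) = degen n.+1 j.+1 (conn n i a x);
  ax_ce_gt : forall n i j a (x : cell n), 1 <= j -> j < i -> i <= n.+1 ->
    conn n.+1 i a (degen n j x) = degen n.+1 j (conn n i.-1 a x);
  ax_ce_eq : forall n j a (x : cell n), 1 <= j <= n.+1 ->
    conn n.+1 j a (degen n j x) = degen n.+1 j.+1 (degen n j x);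
  ax_fc_lt : forall n i j a b (x : cell n.+1), 1 <= i -> i < j -> j <= n.+1 ->
    face n.+1 i a (conn n.+1 j b x) = conn n j.-1 b (face n i a x);
  ax_fc_gt : forall n i j a b (x : cell n.+1), 1 <= j -> j.+1 < i -> i <= n.+2 ->
    face n.+1 i a (conn n.+1 j b x) = conn n j b (face n i.-1 a x);
  ax_fc_id : forall n j a (x : cell n), 1 <= j <= n ->
    face n j a (conn n j a x) = x /\ face n j.+1 a (conn n j a x) = x;
  ax_fc_deg : forall n j a (x : cell n.+1), 1 <= j <= n.+1 ->
    face n.+1 j a (conn n.+1 j (~~ a) x) = degen n j (face n j a x) /\
    face n.+1 j.+1 a (conn n.+1 j (~~ a) x) = degen n j (face n j a x);

  ax_comp_f : forall n j (a b : cell n.+1), 1 <= j <= n.+1 ->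
    face n j true a = face n j false b ->
    face n j false (comp n.+1 j a b) = face n j false a /\
    face n j true (comp n.+1 j a b) = face n j true b;
  ax_comp_f_lt : forall n i j c (a b : cell n.+2), 1 <= i -> i < j -> j <= n.+2 ->
    face n.+1 j true a = face n.+1 j false b ->
    face n.+1 i c (comp n.+2 j a b) = comp n.+1 j.-1 (face n.+1 i c a) (face n.+1 i c b);
  ax_comp_f_gt : forall n i j c (a b : cell n.+2), 1 <= j -> j < i -> i <= n.+2 ->
    face n.+1 j true a = face n.+1 j false b ->
    face n.+1 i c (comp n.+2 j a b) = comp n.+1 j (face n.+1 i c a) (face n.+1 i c b);
  ax_interchange : forall n i j (a b c d : cell n.+1),
    1 <= i <= n.+1 -> 1 <= j <= n.+1 -> i != j ->
    face n i true a = face n i false b -> face n i true c = face n i false d ->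
    face n j true a = face n j false c -> face n j true b = face n j false d ->
    comp n.+1 j (comp n.+1 i a b) (comp n.+1 i c d)
    = comp n.+1 i (comp n.+1 j a c) (comp n.+1 j b d);
  ax_e_comp_le : forall n i j (a b : cell n.+1), 1 <= i -> i <= j -> j <= n.+1 ->
    face n j true a = face n j false b ->
    degen n.+1 i (comp n.+1 j a b) = comp n.+2 j.+1 (degen n.+1 i a) (degen n.+1 i b);
  ax_e_comp_gt : forall n i j (a b : cell n.+1), 1 <= j -> j < i -> i <= n.+2 ->
    face n j true a = face n j false b ->
    degen n.+1 i (comp n.+1 j a b) = comp n.+2 j (degen n.+1 i a) (degen n.+1 i b);
  ax_conn_comp_lt : forall n i j c (a b : cell n.+1), 1 <= i -> i < j -> j <= n.+1 ->
    face n j true a = face n j false b ->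
    conn n.+1 i c (comp n.+1 j a b) = comp n.+2 j.+1 (conn n.+1 i c a) (conn n.+1 i c b);
  ax_conn_comp_gt : forall n i j c (a b : cell n.+1), 1 <= j -> j < i -> i <= n.+1 ->
    face n j true a = face n j false b ->
    conn n.+1 i c (comp n.+1 j a b) = comp n.+2 j (conn n.+1 i c a) (conn n.+1 i c b);
  ax_conn_comp_plus : forall n j (a b : cell n.+1), 1 <= j <= n.+1 ->
    face n j true a = face n j false b ->
    conn n.+1 j true (comp n.+1 j a b)
    = comp n.+2 j.+1 (comp n.+2 j (conn n.+1 j true a) (degen n.+1 j a))
                     (comp n.+2 j (degen n.+1 j.+1 a) (conn n.+1 j true b));
  ax_conn_comp_minus : forall n j (a b : cell n.+1), 1 <= j <= n.+1 ->
    face n j true a = face n j false b ->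
    conn n.+1 j false (comp n.+1 j a b)
    = comp n.+2 j.+1 (comp n.+2 j (conn n.+1 j false a) (degen n.+1 j.+1 b))
                     (comp n.+2 j (degen n.+1 j b) (conn n.+1 j false b));

  ax_assoc : forall n j (a b c : cell n.+1), 1 <= j <= n.+1 ->
    face n j true a = face n j false b -> face n j true b = face n j false c ->
    comp n.+1 j (comp n.+1 j a b) c = comp n.+1 j a (comp n.+1 j b c);
  ax_unit : forall n j (a : cell n.+1), 1 <= j <= n.+1 ->
    comp n.+1 j (degen n j (face n j false a)) a = a /\
    comp n.+1 j a (degen n j (face n j true a)) = a;

  ax_conn_inv : forall n i (x : cell n), 1 <= i <= n ->
    comp n.+1 i (conn n i true x) (conn n i false x) = degen n i.+1 x /\
    comp n.+1 i.+1 (conn n i true x) (conn n i false x) = degen n i x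
}.

Arguments face {c0 n}.
Arguments degen {c0 n}.
Arguments conn {c0 n}.
Arguments comp {c0 n}.

Set Implicit Arguments.
Unset Strict Implicit.
Unset Printing Implicit Defensive.

Section Folding.
Variable C : cubcat.

Definition fold_psi (m : nat) (i : nat) (x : cell C m.+1) : cell C m.+1 :=
  comp i.+1 (comp i.+1 (conn i true (face i.+1 false x)) x)
            (conn i false (face i.+1 true x)).

(* Psi_r = psi_{r-1} ... psi_1  (psi_1 applied first); Psi_0 = Psi_1 = id *)
Fixpoint PsiF (T : Type) (f : nat -> T -> T) (r : nat) (x : T) : T :=
  match r with
  | 0 => x
  | r'.+1 => if r' is 0 then x else f r' (PsiF f r' x)
  end.

(* Phi_n = Psi_1 Psi_2 ... Psi_n  (Psi_n applied first) *)
Fixpoint PhiF (T : Type) (f : nat -> T -> T) (n : nat) (x : T) : T :=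
  match n with
  | 0 => x
  | n'.+1 => PhiF f n' (PsiF f n'.+1 x)
  end.

Definition Phi (m : nat) (x : cell C m.+1) : cell C m.+1 :=
  PhiF (@fold_psi m) m.+1 x.

(* families z^a_i (i = 1..n, a = -/+) of elements of G_m; an n-shell of
   G_{n-1} (n = m+1) is such a family (entries i = 1..m+1 relevant)
   satisfying the shell condition *)
Definition sh (m : nat) := nat -> bool -> cell C m.

Definition is_shell (m : nat) : sh m -> Prop :=
  match m as m0 return sh m0 -> Prop with
  | 0 => fun _ => True
  | k.+1 => fun z => forall i j a b, 1 <= i -> i < j -> j <= k.+2 ->
                      face i a (z j b) = face j.-1 b (z i a)
  end.

Definition shell_eq (m : nat) (z w : sh m) : Prop :=
  forall i a, 1 <= i <= m.+1 -> z i a = w i a.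

Definition bdry (m : nat) (x : cell C m.+1) : sh m := fun i a => face i a x.

Definition shell_psi (m : nat) : nat -> sh m -> sh m :=
  match m as m0 return nat -> sh m0 -> sh m0 with
  | 0 => fun _ z => z
  | k.+1 => fun j z i a =>
      if i < j then @fold_psi k j.-1 (z i a)
      else if i == j then
        (if a then comp j (z j.+1 false) (z j true)
              else comp j (z j false) (z j.+1 true))
      else if i == j.+1 then degen j (face j a (z j.+1 a))
      else @fold_psi k j (z i a)
  end.

Definition shell_Phi (m : nat) (z : sh m) : sh m :=
  PhiF (@shell_psi m) m.+1 z.

End Folding.

(* Main.v *)
Require Import Defs.
From mathcomp Require Import ssreflect ssrfun ssrbool eqtype ssrnat seq.
From mathcomp Require Import zify.
Require Import Defs.

Arguments ax_ff {c0 n}.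
Arguments ax_ee {c0 n}.
Arguments ax_fe_lt {c0 n}.
Arguments ax_fe_gt {c0 n}.
Arguments ax_fe_eq {c0 n}.
Arguments ax_cc_lt {c0 n}.
Arguments ax_cc_eq {c0 n}.
Arguments ax_ce_lt {c0 n}.
Arguments ax_ce_gt {c0 n}.
Arguments ax_ce_eq {c0 n}.
Arguments ax_fc_lt {c0 n}.
Arguments ax_fc_gt {c0 n}.
Arguments ax_fc_id {c0 n}.
Arguments ax_fc_deg {c0 n}.
Arguments ax_comp_f {c0 n}.
Arguments ax_comp_f_lt {c0 n}.
Arguments ax_comp_f_gt {c0 n}.
Arguments ax_interchange {c0 n}.
Arguments ax_e_comp_le {c0 n}.
Arguments ax_e_comp_gt {c0 n}.
Arguments ax_conn_comp_lt {c0 n}.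
Arguments ax_conn_comp_gt {c0 n}.
Arguments ax_conn_comp_plus {c0 n}.
Arguments ax_conn_comp_minus {c0 n}.
Arguments ax_assoc {c0 n}.
Arguments ax_unit {c0 n}.
Arguments ax_conn_inv {c0 n}.
Set Implicit Arguments.
Unset Strict Implicit.
Unset Printing Implicit Defensive.

Section S.
Variable C : cubcat.

Ltac sc := try (by lia); try done; try reflexivity.
Tactic Notation "rw" constr(t) := rewrite t /=; sc.
Tactic Notation "rwl" constr(t) := rewrite -t; sc.


Lemma fe_eq n j a (x : cell C n) : 1 <= j <= n.+1 -> face j a (degen j x) = x.
Proof. exact: ax_fe_eq. Qed.
Lemma fe_lt n i j a (x : cell C n.+1) : 1 <= i -> i < j -> j <= n.+2 ->
  face i a (degen j x) = degen j.-1 (face i a x).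
Proof. exact: ax_fe_lt. Qed.
Lemma fe_gt n i j a (x : cell C n.+1) : 1 <= j -> j < i -> i <= n.+2 ->
  face i a (degen j x) = degen j (face i.-1 a x).
Proof. exact: ax_fe_gt. Qed.
Lemma ff n i j a b (x : cell C n.+2) : 1 <= i -> i < j -> j <= n.+2 ->
    face i a (face j b x) = face j.-1 b (face i a x).
Proof. exact: ax_ff. Qed.
Lemma fc_id1 n j a (x : cell C n) : 1 <= j <= n -> face j a (conn j a x) = x.
Proof. by move=> h; case: (ax_fc_id j a x h). Qed.
Lemma fc_id2 n j a (x : cell C n) : 1 <= j <= n -> face j.+1 a (conn j a x) = x.
Proof. by move=> h; case: (ax_fc_id j a x h). Qed.
Lemma fc_dm1 n j (x : cell C n.+1) : 1 <= j <= n.+1 ->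
  face j false (conn j true x) = degen j (face j false x).
Proof. by move=> h; case: (ax_fc_deg j false x h). Qed.
Lemma fc_dp1 n j (x : cell C n.+1) : 1 <= j <= n.+1 ->
  face j true (conn j false x) = degen j (face j true x).
Proof. by move=> h; case: (ax_fc_deg j true x h). Qed.
Lemma fc_dm2 n j (x : cell C n.+1) : 1 <= j <= n.+1 ->
  face j.+1 false (conn j true x) = degen j (face j false x).
Proof. by move=> h; case: (ax_fc_deg j false x h). Qed.
Lemma fc_dp2 n j (x : cell C n.+1) : 1 <= j <= n.+1 ->
  face j.+1 true (conn j false x) = degen j (face j true x).
Proof. by move=> h; case: (ax_fc_deg j true x h). Qed.
Lemma fc_lt n i j a b (x : cell C n.+1) : 1 <= i -> i < j -> j <= n.+1 ->
    face i a (conn j b x) = conn j.-1 b (face i a x).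
Proof. exact: ax_fc_lt. Qed.
Lemma fc_gt n i j a b (x : cell C n.+1) : 1 <= j -> j.+1 < i -> i <= n.+2 ->
    face i a (conn j b x) = conn j b (face i.-1 a x).
Proof. exact: ax_fc_gt. Qed.
Lemma cf1 n j (a b : cell C n.+1) : 1 <= j <= n.+1 ->
    face j true a = face j false b -> face j false (comp j a b) = face j false a.
Proof. by move=> h e; case: (ax_comp_f j a b h e). Qed.
Lemma cf2 n j (a b : cell C n.+1) : 1 <= j <= n.+1 ->
    face j true a = face j false b -> face j true (comp j a b) = face j true b.
Proof. by move=> h e; case: (ax_comp_f j a b h e). Qed.
Lemma cf_lt n i j c (a b : cell C n.+2) : 1 <= i -> i < j -> j <= n.+2 ->
    face j true a = face j false b ->
    face i c (comp j a b) = comp j.-1 (face i c a) (face i c b).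
Proof. exact: ax_comp_f_lt. Qed.
Lemma cf_gt n i j c (a b : cell C n.+2) : 1 <= j -> j < i -> i <= n.+2 ->
    face j true a = face j false b ->
    face i c (comp j a b) = comp j (face i c a) (face i c b).
Proof. exact: ax_comp_f_gt. Qed.
Lemma unitl n j u (a : cell C n.+1) : 1 <= j <= n.+1 -> u = face j false a ->
  comp j (degen j u) a = a.
Proof. by move=> h ->; case: (ax_unit j a h). Qed.
Lemma unitr n j u (a : cell C n.+1) : 1 <= j <= n.+1 -> u = face j true a ->
  comp j a (degen j u) = a.
Proof. by move=> h ->; case: (ax_unit j a h). Qed.
Lemma ee_jj n j (x : cell C n) : 1 <= j <= n.+1 ->
  degen j.+1 (degen j x) = degen j (degen j x).
Proof. by move=> h; rewrite (ax_ee j j x) //; lia. Qed.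
Lemma cinv1 n j (x : cell C n) : 1 <= j <= n ->
  comp j (conn j true x) (conn j false x) = degen j.+1 x.
Proof. by move=> h; case: (ax_conn_inv j x h). Qed.
Lemma cinv2 n j (x : cell C n) : 1 <= j <= n ->
  comp j.+1 (conn j true x) (conn j false x) = degen j x.
Proof. by move=> h; case: (ax_conn_inv j x h). Qed.
Lemma ecomp n j (a b : cell C n.+1) : 1 <= j <= n.+1 ->
    face j true a = face j false b ->
    comp j.+1 (degen j a) (degen j b) = degen j (comp j a b).
Proof. by move=> h e; rewrite (ax_e_comp_le j j a b) //; lia. Qed.
Lemma assoc n j (a b c : cell C n.+1) : 1 <= j <= n.+1 ->
    face j true a = face j false b -> face j true b = face j false c ->
    comp j (comp j a b) c = comp j a (comp j b c).
Proof. exact: ax_assoc. Qed.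
Lemma ich n i j (a b c d : cell C n.+1) :
    1 <= i <= n.+1 -> 1 <= j <= n.+1 -> i != j ->
    face i true a = face i false b -> face i true c = face i false d ->
    face j true a = face j false c -> face j true b = face j false d ->
    comp j (comp i a b) (comp i c d) = comp i (comp j a c) (comp j b d).
Proof. exact: ax_interchange. Qed.

Lemma psi_d1 m i (x : cell C m.+2) : 1 <= i <= m.+1 ->
  face i.+1 true (conn i true (face i.+1 false x)) = face i.+1 false x.
Proof. by move=> hi; rewrite fc_id2. Qed.
Lemma psi_d2 m i (x : cell C m.+2) : 1 <= i <= m.+1 ->
  face i.+1 true (comp i.+1 (conn i true (face i.+1 false x)) x)
   = face i.+1 false (conn i false (face i.+1 true x)).
Proof. by move=> hi; rewrite cf2 ?psi_d1 ?fc_id2; sc. Qed.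

Lemma L2b m i (x : cell C m.+2) : 1 <= i <= m.+1 ->
  face i false (fold_psi i x) = comp i (face i false x) (face i.+1 true x).
Proof.
move=> hi; rewrite /fold_psi.
rewrite cf_lt /=; sc; last by apply: psi_d2; lia.
rewrite cf_lt /=; sc; last by apply: psi_d1; lia.
rewrite fc_id1 ?fc_dm1 ?unitl; sc.
by rewrite ff; sc.
Qed.

Lemma L2b' m i (x : cell C m.+2) : 1 <= i <= m.+1 ->
  face i true (fold_psi i x) = comp i (face i.+1 false x) (face i true x).
Proof.
move=> hi; rewrite /fold_psi.
rewrite cf_lt /=; sc; last by apply: psi_d2; lia.
rewrite cf_lt /=; sc; last by apply: psi_d1; lia.
rewrite fc_id1; sc.
rw fc_dp1.
rw unitr.
rw cf2; first by rw ff.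
by rw ff.
Qed.


Lemma L2a m i p a (x : cell C m.+2) : 1 <= p <= i -> i.+1 <= m.+1 ->
  face p a (fold_psi i.+1 x) = fold_psi i (face p a x).
Proof.
move=> hp hi; rewrite /fold_psi.
rewrite cf_lt /=; sc; last by apply: psi_d2; lia.
rewrite cf_lt /=; sc; last by apply: psi_d1; lia.
rw fc_lt. rw fc_lt. rewrite !(ff (i:=p) (j:=i.+2)); sc.
Qed.

Lemma L2c m i (x : cell C m.+2) : 1 <= i <= m.+1 ->
  face i.+1 false (fold_psi i x) = degen i (face i false (face i.+1 false x)).
Proof.
move=> hi; rewrite /fold_psi.
rewrite cf1; sc; last by apply: psi_d2; lia.
rewrite cf1; sc; last by apply: psi_d1; lia.
by rw fc_dm2.
Qed.

Lemma L2c' m i (x : cell C m.+2) : 1 <= i <= m.+1 ->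
  face i.+1 true (fold_psi i x) = degen i (face i true (face i.+1 true x)).
Proof.
move=> hi; rewrite /fold_psi.
rewrite cf2; sc; last by apply: psi_d2; lia.
by rw fc_dp2.
Qed.

Lemma L2d m i p a (x : cell C m.+2) : 1 <= i -> i.+1 < p -> p <= m.+2 ->
  face p a (fold_psi i x) = fold_psi i (face p a x).
Proof.
move=> h1 h2 h3; rewrite /fold_psi.
rewrite cf_gt; sc; last by apply: psi_d2; lia.
rewrite cf_gt; sc; last by apply: psi_d1; lia.
rw fc_gt. rw fc_gt.
by rewrite -!(ff (i:=i.+1) (j:=p)); sc.
Qed.


Definition C1 n j (l b : cell C n.+1) : cell C n.+2 :=
  comp j.+1 (degen j l) (conn j true b).
Definition C3 n j (a r : cell C n.+1) : cell C n.+2 :=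
  comp j.+1 (conn j false a) (degen j r).
Definition theta n j (l r a b : cell C n.+1) (y : cell C n.+2) : cell C n.+2 :=
  comp j (C1 j l b) (comp j y (C3 j a r)).

Section CF.
Variables (n j : nat) (l r a b : cell C n.+1).
Hypothesis hj : 1 <= j <= n.+1.

Lemma C1def : face j true l = face j false b ->
  face j.+1 true (degen j l) = face j.+1 false (conn j true b).
Proof. by move=> e; rw fe_gt; rw fc_dm2; rewrite e. Qed.
Lemma C3def : face j true a = face j false r ->
  face j.+1 true (conn j false a) = face j.+1 false (degen j r).
Proof. by move=> e; rw fe_gt; rw fc_dp2; rewrite e. Qed.

Hypothesis D1 : face j true l = face j false b.
Hypothesis D2 : face j true a = face j false r.

Lemma C1m : face j false (C1 j l b) = l.
Proof.
rewrite /C1 cf_lt /=; sc; last exact: C1def.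
rw fe_eq. rw fc_dm1. by rw unitr.
Qed.
Lemma C1p : face j true (C1 j l b) = comp j l b.
Proof.
rewrite /C1 cf_lt /=; sc; last exact: C1def.
rw fe_eq. by rw fc_id1.
Qed.
Lemma C1m' : face j.+1 false (C1 j l b) = degen j (face j false l).
Proof.
rewrite /C1 cf1 /=; sc; last exact: C1def.
by rw fe_gt.
Qed.
Lemma C1p' : face j.+1 true (C1 j l b) = b.
Proof.
rewrite /C1 cf2 /=; sc; last exact: C1def.
by rw fc_id2.
Qed.
Lemma C3m : face j false (C3 j a r) = comp j a r.
Proof.
rewrite /C3 cf_lt /=; sc; last exact: C3def.
rw fe_eq. by rw fc_id1.
Qed.
Lemma C3p : face j true (C3 j a r) = r.
Proof.
rewrite /C3 cf_lt /=; sc; last exact: C3def.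
rw fe_eq. rw fc_dp1. by rw unitl.
Qed.
Lemma C3m' : face j.+1 false (C3 j a r) = a.
Proof.
rewrite /C3 cf1 /=; sc; last exact: C3def.
by rw fc_id2.
Qed.
Lemma C3p' : face j.+1 true (C3 j a r) = degen j (face j true r).
Proof.
rewrite /C3 cf2 /=; sc; last exact: C3def.
by rw fe_gt.
Qed.
End CF.


Section L5.
Variables (m j : nat) (x : cell C m.+2).
Hypothesis hj : 1 <= j <= m.+1.
Let l := face j false x.
Let r := face j true x.
Let a := face j.+1 false x.
Let b := face j.+1 true x.

Lemma L5_D1 : face j true l = face j false b.
Proof. by rewrite /l /b (ff (i:=j) (j:=j.+1)); sc. Qed.
Lemma L5_D2 : face j true a = face j false r.
Proof. by rewrite /a /r (ff (i:=j) (j:=j.+1)); sc. Qed.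
Lemma L5_br : face j true b = face j true r.
Proof. by rewrite /b /r (ff (i:=j) (j:=j.+1)); sc. Qed.

Lemma L5_step1 : comp j (fold_psi j x) (C3 j a r) = comp j.+1 x (conn j false b).
Proof.
have eC3 : C3 j a r = comp j.+1 (C3 j a r) (degen j.+1 (face j.+1 true (C3 j a r))).
  by rw unitr.
rewrite {1}eC3 /fold_psi -/a -/b.
have e1 := psi_d2 x hj; rewrite -/a -/b in e1.
have e2 : face j.+1 true (C3 j a r) = face j.+1 false (degen j.+1 (face j.+1 true (C3 j a r))).
  by rw fe_eq.
have e3 : face j true (comp j.+1 (conn j true a) x) = face j false (C3 j a r).
  rewrite C3m; sc; last exact: L5_D2.
  rewrite cf_lt /=; sc; last by rw fc_id2.
  by rw fc_id1.
have e4 : face j true (conn j false b) = face j false (degen j.+1 (face j.+1 true (C3 j a r))).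
  rw fc_dp1. rw fe_lt. rewrite C3p'; sc; last exact: L5_D2.
  rw fe_eq. by rewrite L5_br.
rewrite (ich (i:=j.+1) (j:=j)); sc.
rewrite {1}/C3 (ich (i:=j.+1) (j:=j)); sc; first last.
- by rw fe_eq.
- by rw fc_id1; rw fc_id1.
- by apply: C3def; sc; exact: L5_D2.
- by rw fc_id2.
rw cinv1. rw unitr. rw unitl.
rewrite C3p'; sc; last exact: L5_D2.
rw ee_jj. rw unitr.
by rw fc_dp1; rewrite L5_br.
Qed.

Lemma L5 : theta j l r a b (fold_psi j x) = x.
Proof.
rewrite /theta L5_step1 /C1.
rewrite (ich (i:=j.+1) (j:=j)); sc; first last.
- by rw fc_id1; rw fc_id1.
- by rw fe_eq.
- by rw fc_id2.
- by apply: C1def; sc; exact: L5_D1.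
rw cinv1. rw unitl. by rw unitr.
Qed.
End L5.


Section TF.
Variables (n j : nat) (l r a b : cell C n.+1) (y : cell C n.+2).
Hypothesis hj : 1 <= j <= n.+1.
Hypothesis D1 : face j true l = face j false b.
Hypothesis D2 : face j true a = face j false r.
Hypothesis D3 : face j true y = comp j a r.
Hypothesis D4 : face j false y = comp j l b.

Lemma TD3 : face j true y = face j false (C3 j a r).
Proof. by rewrite C3m. Qed.
Lemma TD4 : face j true (C1 j l b) = face j false (comp j y (C3 j a r)).
Proof. rewrite C1p // cf1; sc; try (by rewrite D4); exact: TD3. Qed.

Lemma TFm : face j false (theta j l r a b y) = l.
Proof. rewrite /theta cf1; sc; try exact: TD4; exact: C1m. Qed.
Lemma TFp : face j true (theta j l r a b y) = r.
Proof.
rewrite /theta cf2; sc; try exact: TD4.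
rewrite cf2; sc; try exact: TD3.
exact: C3p.
Qed.
Lemma TFm' : face j.+1 false y = degen j (face j false a) ->
  face j false l = face j false a -> face j.+1 false (theta j l r a b y) = a.
Proof.
move=> E1 S1.
rewrite /theta cf_gt; sc; try exact: TD4.
rewrite cf_gt; sc; try exact: TD3.
rewrite C1m' // C3m' // E1.
rw unitl; [by rw unitl | by rw unitl].
Qed.
Lemma TFp' : face j.+1 true y = degen j (face j true b) ->
  face j true b = face j true r -> face j.+1 true (theta j l r a b y) = b.
Proof.
move=> E2 S2.
rewrite /theta cf_gt; sc; try exact: TD4.
rewrite cf_gt; sc; try exact: TD3.
rewrite C1p' // C3p' // E2 -S2.
rw unitl; [by rw unitr | by rw fe_eq].
Qed.
End TF.

Lemma C1_lt n j p c (l b : cell C n.+2) : 1 <= p <= j -> j.+1 <= n.+2 ->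
  face j.+1 true l = face j.+1 false b ->
  face p c (C1 j.+1 l b) = C1 j (face p c l) (face p c b).
Proof.
move=> hp hj D1; rewrite /C1 cf_lt /=; sc; last by apply: C1def; sc.
rw fe_lt. by rw fc_lt.
Qed.
Lemma C3_lt n j p c (a r : cell C n.+2) : 1 <= p <= j -> j.+1 <= n.+2 ->
  face j.+1 true a = face j.+1 false r ->
  face p c (C3 j.+1 a r) = C3 j (face p c a) (face p c r).
Proof.
move=> hp hj D2; rewrite /C3 cf_lt /=; sc; last by apply: C3def; sc.
rw fe_lt. by rw fc_lt.
Qed.
Lemma C1_gt n j p c (l b : cell C n.+2) : 1 <= j -> j.+1 < p -> p <= n.+3 ->
  face j true l = face j false b ->
  face p c (C1 j l b) = C1 j (face p.-1 c l) (face p.-1 c b).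
Proof.
move=> h1 h2 h3 D1; rewrite /C1 cf_gt /=; sc; last by apply: C1def; sc.
rw fe_gt. by rw fc_gt.
Qed.
Lemma C3_gt n j p c (a r : cell C n.+2) : 1 <= j -> j.+1 < p -> p <= n.+3 ->
  face j true a = face j false r ->
  face p c (C3 j a r) = C3 j (face p.-1 c a) (face p.-1 c r).
Proof.
move=> h1 h2 h3 D2; rewrite /C3 cf_gt /=; sc; last by apply: C3def; sc.
rw fe_gt. by rw fc_gt.
Qed.

Lemma TF_lt n j p c (l r a b : cell C n.+2) (y : cell C n.+3) :
  1 <= p <= j -> j.+1 <= n.+2 ->
  face j.+1 true l = face j.+1 false b ->
  face j.+1 true a = face j.+1 false r ->
  face j.+1 true y = comp j.+1 a r ->
  face j.+1 false y = comp j.+1 l b ->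
  face p c (theta j.+1 l r a b y)
  = theta j (face p c l) (face p c r) (face p c a) (face p c b) (face p c y).
Proof.
move=> hp hj D1 D2 D3 D4.
rewrite /theta cf_lt /=; sc; try (by apply: TD4; sc).
rewrite cf_lt /=; sc; try (by apply: TD3; sc).
by rewrite C1_lt // C3_lt.
Qed.

Lemma TF_gt n j p c (l r a b : cell C n.+2) (y : cell C n.+3) :
  1 <= j -> j.+1 < p -> p <= n.+3 ->
  face j true l = face j false b ->
  face j true a = face j false r ->
  face j true y = comp j a r ->
  face j false y = comp j l b ->
  face p c (theta j l r a b y)
  = theta j (face p.-1 c l) (face p.-1 c r) (face p.-1 c a) (face p.-1 c b) (face p c y).
Proof.
move=> h1 h2 h3 D1 D2 D3 D4.
rewrite /theta cf_gt /=; sc; try (by apply: TD4; sc).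
rewrite cf_gt /=; sc; try (by apply: TD3; sc).
by rewrite C1_gt // C3_gt.
Qed.


Section L6.
Variables (n j : nat) (l r a b : cell C n.+1) (y : cell C n.+2).
Hypothesis hj : 1 <= j <= n.+1.
Hypothesis D1 : face j true l = face j false b.
Hypothesis D2 : face j true a = face j false r.
Hypothesis D3 : face j true y = comp j a r.
Hypothesis D4 : face j false y = comp j l b.
Hypothesis E1 : face j.+1 false y = degen j (face j false a).
Hypothesis E2 : face j.+1 true y = degen j (face j true b).
Hypothesis S1 : face j false l = face j false a.
Hypothesis S2 : face j true b = face j true r.

Lemma L6_step1 : comp j.+1 (conn j true a) (theta j l r a b y) = comp j (C1 j l b) y.
Proof.
set c0 := face j false a.
set U := degen j (degen j c0).
have eUA : comp j U (conn j true a) = conn j true a by rw unitl; rw fc_dm1.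
have hU1 : face j true U = face j false (conn j true a) by rw fe_eq; rw fc_dm1.
have hU2 : face j.+1 true U = degen j c0 by rw fe_gt; rw fe_eq.
have eU : U = degen j.+1 (degen j c0) by rw ee_jj.
have td3 : face j true y = face j false (C3 j a r) by exact: TD3.
have td4 := TD4 hj D1 D2 D3 D4.
rewrite -{1}eUA -{1}eUA /theta.
have q1 : face j true U = face j false (comp j U (conn j true a)).
  by rewrite cf1; sc; rewrite !fe_eq; sc.
have q3 : face j.+1 true U = face j.+1 false (C1 j l b) by rewrite hU2 C1m' // S1.
have q4 : face j.+1 true (comp j U (conn j true a)) = face j.+1 false (comp j y (C3 j a r)).
  rewrite cf_gt; sc. rewrite cf_gt; sc.
  by rewrite hU2 C3m' // E1 fc_id2; sc.
rewrite (ich (i:=j) (j:=j.+1)); sc.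
rewrite {1}eU unitl; sc; last by rewrite C1m' // S1.
have q5 : face j.+1 true U = face j.+1 false y by rewrite hU2 E1.
have q6 : face j.+1 true (conn j true a) = face j.+1 false (C3 j a r).
  by rewrite C3m' // fc_id2; sc.
rewrite (ich (i:=j) (j:=j.+1)); sc.
rewrite {1}eU unitl; sc.
have q7 : face j.+1 true (conn j false a) = face j.+1 false (degen j r) by apply: C3def.
have q8 : face j.+1 true (conn j true a) = face j.+1 false (conn j false a).
  by rw fc_id2; rw fc_id2.
rewrite /C3 -(assoc (j:=j.+1)); sc.
rw cinv2. rw ecomp. rewrite -D3. by rw unitr.
Qed.

Lemma L6 : fold_psi j (theta j l r a b y) = y.
Proof.
rewrite /fold_psi TFm' // TFp' // L6_step1.
set B := conn j false b.
have eB : comp j B (degen j (face j true B)) = B by rw unitr.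
rewrite -{1}eB.
have q1 : face j.+1 true y = face j.+1 false (degen j (face j true B)).
  rewrite E2 fe_gt; sc. by rewrite /B fc_dp1; sc; rw fe_eq.
have q2 : face j.+1 true (C1 j l b) = face j.+1 false B by rewrite C1p' // /B fc_id2; sc.
have q3 : face j true B = face j false (degen j (face j true B)) by rw fe_eq.
have q4 : face j true (C1 j l b) = face j false y by rewrite C1p // D4.
rewrite (ich (i:=j) (j:=j.+1)); sc.
have q5 : face j.+1 true (conn j true b) = face j.+1 false (conn j false b).
  by rw fc_id2; rw fc_id2.
have q6 := C1def hj D1.
rewrite /C1 /B (assoc (j:=j.+1)); sc.
rw cinv2. rw ecomp. rewrite -D4.
rewrite fc_dp1; sc. rewrite -ee_jj; sc. rewrite unitr; sc.
by rw unitl.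
Qed.
End L6.


Lemma sp_lt k j (z : sh C k.+1) i a : i < j.+1 ->
  shell_psi j.+1 z i a = fold_psi j (z i a).
Proof. by move=> h; rewrite /shell_psi /= h. Qed.
Lemma sp_m k j (z : sh C k.+1) : shell_psi j z j false = comp j (z j false) (z j.+1 true).
Proof. by rewrite /shell_psi /= ltnn eqxx. Qed.
Lemma sp_p k j (z : sh C k.+1) : shell_psi j z j true = comp j (z j.+1 false) (z j true).
Proof. by rewrite /shell_psi /= ltnn eqxx. Qed.
Lemma sp_s k j (z : sh C k.+1) a : shell_psi j z j.+1 a = degen j (face j a (z j.+1 a)).
Proof.
rewrite /shell_psi /=; case: ifP => h1; first lia.
case: ifP => h2; first lia. by rewrite eqxx.
Qed.
Lemma sp_gt k j (z : sh C k.+1) i a : j.+1 < i -> shell_psi j z i a = fold_psi j (z i a).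
Proof.
move=> h; rewrite /shell_psi /=; case: ifP => h1; first lia.
case: ifP => h2; first lia. case: ifP => h3; first lia. done.
Qed.


Lemma P1 k j (x : cell C k.+2) : 1 <= j <= k.+1 ->
  shell_eq (shell_psi j (bdry x)) (bdry (fold_psi j x)).
Proof.
move=> hj i a hi.
have [hij|hij|hij] := ltngtP i j.
- case: j hj hij => [|j] hj hij; first lia.
  rewrite sp_lt // /bdry L2a //; lia.
- case: (ltngtP i j.+1) => hij2; [lia| |].
  + rewrite sp_gt // /bdry L2d //; lia.
  + subst i; rewrite sp_s /bdry.
    by case: a; [rewrite L2c' | rewrite L2c].
- subst i; case: a; [rewrite sp_p /bdry L2b' | rewrite sp_m /bdry L2b] => //.
Qed.

Lemma P3 k j (z z' : sh C k.+1) : j <= k.+1 -> shell_eq z z' ->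
  shell_eq (shell_psi j z) (shell_psi j z').
Proof.
move=> hj e i a hi; rewrite /shell_psi /=.
have ez : forall p b, 1 <= p <= k.+2 -> z p b = z' p b by move=> p b hp; apply: e.
case: ifP => h1; first by rewrite ez.
case: ifP => h2.
  move/eqP: h2 => h2; subst i.
  by case: a; rewrite !ez //; lia.
case: ifP => h3; last by rewrite ez.
by move/eqP: h3 => h3; subst i; rewrite ez //; lia.
Qed.

Lemma P2E k j (z : sh C k.+1) : 1 <= j <= k.+1 -> is_shell z -> forall a b,
  face j a (shell_psi j z j.+1 b) = face j b (shell_psi j z j a).
Proof.
move=> hj hz.
have hz' : forall p q a b, 1 <= p -> p < q -> q <= k.+2 ->
   face p a (z q b) = face q.-1 b (z p a) by exact: hz.
have d1 : face j true (z j false) = face j false (z j.+1 true) by rewrite (hz' j j.+1); sc.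
have d2 : face j true (z j.+1 false) = face j false (z j true) by rewrite (hz' j j.+1); sc.
move=> a b; rewrite sp_s fe_eq; sc.
case: a; [rewrite sp_p | rewrite sp_m].
- case: b; [rewrite cf2 | rewrite cf1]; sc.
  by rewrite (hz' j j.+1); sc.
- case: b; [rewrite cf2 | rewrite cf1]; sc.
  by rewrite (hz' j j.+1); sc.
Qed.


Lemma P2_0 j (z : sh C 1) : 1 <= j <= 1 -> is_shell z -> is_shell (shell_psi j z).
Proof.
move=> hj hz p q a b hp hpq hq.
have ej : j = 1 by lia.
have ep : p = 1 by lia.
have eq : q = 2 by lia.
subst j p q => /=.
exact: (P2E (k:=0)).
Qed.

Lemma P2_S k j (z : sh C k.+2) : 1 <= j.+1 <= k.+2 -> is_shell z ->
  is_shell (shell_psi j.+1 z).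
Proof.
move=> hj hz.
have hz' : forall p q a b, 1 <= p -> p < q -> q <= k.+3 ->
   face p a (z q b) = face q.-1 b (z p a) by exact: hz.
move=> p q a b hp hpq hq.
have [hq1|hq1|hq1] := ltngtP q j.+1.
-
  rewrite !sp_lt; sc.
  case: j hj hq1 => [|j] hj hq1; first lia.
  rewrite L2a; sc. rewrite L2a; sc. by rewrite (hz' p q); sc.
- have [hp1|hp1|hp1] := ltngtP p j.+1.
  + have [hq2|hq2|hq2] := ltngtP q j.+2; first lia.
    *
      rewrite sp_gt; sc. rewrite sp_lt; sc.
      rewrite L2a; sc. rewrite L2d; sc. by rewrite (hz' p q); sc.
    *
      subst q; rewrite sp_s sp_lt; sc => /=.
      rewrite fe_lt; sc => /=. rewrite (ff (i:=p) (j:=j.+1)); sc => /=.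
      rewrite (hz' p j.+2); sc => /=.
      by case: b; [rewrite L2c' | rewrite L2c]; sc.
  +
    have [hp2|hp2|hp2] := ltngtP p j.+2; first lia.
    *
      rewrite !sp_gt; sc. rewrite L2d; sc. rewrite L2d; sc. by rewrite (hz' p q); sc.
    *
      subst p; rewrite sp_s sp_gt; sc.
      rewrite fe_gt; sc.
      have -> : face j.+2 a (fold_psi j.+1 (z q b)) =
        degen j.+1 (face j.+1 a (face j.+2 a (z q b))).
        by case: a; [rewrite L2c' | rewrite L2c]; sc.
      rewrite (hz' j.+2 q); sc. rewrite (ff (i:=j.+1) (j:=q.-1)); sc.
  + subst p.
    have [hq2|hq2|hq2] := ltngtP q j.+2; first lia.
    *
      have d1 : face j.+1 true (z j.+1 false) = face j.+1 false (z j.+2 true).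
        by rewrite (hz' j.+1 j.+2); sc.
      have d2 : face j.+1 true (z j.+2 false) = face j.+1 false (z j.+1 true).
        by rewrite (hz' j.+1 j.+2); sc.
      rewrite sp_gt; sc.
      case: a.
      - rewrite sp_p L2b'; sc. rewrite cf_gt; sc.
        by rewrite (hz' j.+1 q) ?(hz' j.+2 q); sc.
      - rewrite sp_m L2b; sc. rewrite cf_gt; sc.
        by rewrite (hz' j.+1 q) ?(hz' j.+2 q); sc.
    *
      subst q => /=. apply: P2E; sc.
-
  subst q; rewrite [shell_psi _ _ p _]sp_lt; sc.
  have d1 : face j.+1 true (z j.+1 false) = face j.+1 false (z j.+2 true).
    by rewrite (hz' j.+1 j.+2); sc.
  have d2 : face j.+1 true (z j.+2 false) = face j.+1 false (z j.+1 true).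
    by rewrite (hz' j.+1 j.+2); sc.
  case: b.
  + rewrite sp_p L2b' /=; sc. rewrite cf_lt /=; sc.
    by rewrite (hz' p j.+1) ?(hz' p j.+2); sc.
  + rewrite sp_m L2b /=; sc. rewrite cf_lt /=; sc.
    by rewrite (hz' p j.+1) ?(hz' p j.+2); sc.
Qed.


Lemma P4 k j (x x' : cell C k.+2) : 1 <= j <= k.+1 ->
  shell_eq (bdry x) (bdry x') -> fold_psi j x = fold_psi j x' -> x = x'.
Proof.
move=> hj e ef.
have e' : forall i a, 1 <= i <= k.+2 -> face i a x = face i a x' by exact: e.
rewrite -(L5 x hj) -(L5 x' hj) ef !e'; sc.
Qed.

Section P5.
Variables (k j : nat) (z : sh C k.+1) (y : cell C k.+2).
Hypothesis hj : 1 <= j <= k.+1.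
Hypothesis hz : is_shell z.
Hypothesis e : shell_eq (shell_psi j z) (bdry y).

Lemma hz5 : forall p q a b, 1 <= p -> p < q -> q <= k.+2 ->
   face p a (z q b) = face q.-1 b (z p a).
Proof. exact: hz. Qed.
Lemma e5 : forall i a, 1 <= i <= k.+2 -> shell_psi j z i a = face i a y.
Proof. exact: e. Qed.

Lemma P5D1 : face j true (z j false) = face j false (z j.+1 true).
Proof. by rewrite (hz5 (p:=j) (q:=j.+1)); sc. Qed.
Lemma P5D2 : face j true (z j.+1 false) = face j false (z j true).
Proof. by rewrite (hz5 (p:=j) (q:=j.+1)); sc. Qed.
Lemma P5D3 : face j true y = comp j (z j.+1 false) (z j true).
Proof. by rewrite -e5 ?sp_p; sc. Qed.
Lemma P5D4 : face j false y = comp j (z j false) (z j.+1 true).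
Proof. by rewrite -e5 ?sp_m; sc. Qed.
Lemma P5E1 : face j.+1 false y = degen j (face j false (z j.+1 false)).
Proof. by rewrite -e5 ?sp_s; sc. Qed.
Lemma P5E2 : face j.+1 true y = degen j (face j true (z j.+1 true)).
Proof. by rewrite -e5 ?sp_s; sc. Qed.
Lemma P5S1 : face j false (z j false) = face j false (z j.+1 false).
Proof. by rewrite (hz5 (p:=j) (q:=j.+1)); sc. Qed.
Lemma P5S2 : face j true (z j.+1 true) = face j true (z j true).
Proof. by rewrite (hz5 (p:=j) (q:=j.+1)); sc. Qed.

Let X := theta j (z j false) (z j true) (z j.+1 false) (z j.+1 true) y.

Lemma P5psi : fold_psi j X = y.
Proof.
apply: L6 => //; [exact: P5D1|exact: P5D2|exact: P5D3|exact: P5D4|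
  exact: P5E1|exact: P5E2|exact: P5S1|exact: P5S2].
Qed.
Lemma P5fj c : face j c X = z j c.
Proof.
case: c; [apply: TFp | apply: TFm] => //;
  [exact: P5D1|exact: P5D2|exact: P5D3|exact: P5D4|
   exact: P5D1|exact: P5D2|exact: P5D3|exact: P5D4].
Qed.
Lemma P5fj1 c : face j.+1 c X = z j.+1 c.
Proof.
case: c; [apply: TFp' | apply: TFm'] => //;
  first [exact: P5D1|exact: P5D2|exact: P5D3|exact: P5D4|
   exact: P5E1|exact: P5E2|exact: P5S1|exact: P5S2].
Qed.
End P5.


Lemma P5_0 j (z : sh C 1) (y : cell C 2) : 1 <= j <= 1 -> is_shell z ->
  shell_eq (shell_psi j z) (bdry y) ->
  exists x, shell_eq (bdry x) z /\ fold_psi j x = y.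
Proof.
move=> hj hz e.
exists (theta j (z j false) (z j true) (z j.+1 false) (z j.+1 true) y).
split; last exact: P5psi.
move=> i c hi; rewrite /bdry.
have ej : j = 1 by lia. 
have [h|h] : i = j \/ i = j.+1 by lia.
- by subst i; apply: P5fj.
- by subst i; apply: P5fj1.
Qed.

Lemma P5_S k j (z : sh C k.+2) (y : cell C k.+3) : 1 <= j <= k.+2 -> is_shell z ->
  shell_eq (shell_psi j z) (bdry y) ->
  exists x, shell_eq (bdry x) z /\ fold_psi j x = y.
Proof.
move=> hj hz e.
exists (theta j (z j false) (z j true) (z j.+1 false) (z j.+1 true) y).
split; last exact: P5psi.
move=> i c hi; rewrite /bdry.
have hz' : forall p q a b, 1 <= p -> p < q -> q <= k.+3 ->
   face p a (z q b) = face q.-1 b (z p a) by exact: hz.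
have [h|h|h] := ltngtP i j.
- move: hj e h; case: j => [|j] hj e h; first lia.
  rewrite TF_lt; sc; try (by apply: P5D1); try (by apply: P5D2);
    try (by apply: P5D3); try (by apply: P5D4).
  have := e i c hi; rewrite /bdry sp_lt // => <-.
  rewrite (hz' i j.+1) ?(hz' i j.+2) ?(hz' i j.+1); sc.
  apply: L5; sc.
- have [h2|h2] : i = j.+1 \/ j.+1 < i by lia.
  + by subst i; apply: P5fj1.
  + rewrite TF_gt; sc; try (by apply: P5D1); try (by apply: P5D2);
      try (by apply: P5D3); try (by apply: P5D4).
    have := e i c hi; rewrite /bdry sp_gt // => <-.
    rewrite -(hz' j i) -?(hz' j.+1 i); sc.
    rewrite -(hz' j i true c) -?(hz' j.+1 i false c) -?(hz' j.+1 i true c); sc.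
    apply: L5; sc.
- by subst i; apply: P5fj.
Qed.


Lemma P2 k j (z : sh C k.+1) : 1 <= j <= k.+1 -> is_shell z -> is_shell (shell_psi j z).
Proof.
case: k z => [|k] z hj hz; first exact: P2_0.
case: j hj => [|j] hj; first lia. exact: P2_S.
Qed.

Lemma P5 k j (z : sh C k.+1) (y : cell C k.+2) : 1 <= j <= k.+1 -> is_shell z ->
  shell_eq (shell_psi j z) (bdry y) ->
  exists x, shell_eq (bdry x) z /\ fold_psi j x = y.
Proof. case: k z y => [|k] z y; [exact: P5_0 | exact: P5_S]. Qed.

Lemma seq_sym m (z w : sh C m) : shell_eq z w -> shell_eq w z.
Proof. by move=> e i a hi; rewrite e. Qed.
Lemma seq_trans m (z w v : sh C m) : shell_eq z w -> shell_eq w v -> shell_eq z v.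
Proof. by move=> e1 e2 i a hi; rewrite e1 // e2. Qed.
Lemma seq_refl m (z : sh C m) : shell_eq z z.
Proof. by []. Qed.

Definition run T (f : nat -> T -> T) (L : seq nat) (x : T) :=
  foldl (fun x j => f j x) x L.

Fixpoint phil n := if n is n'.+1 then iota 1 n' ++ phil n' else [::].

Lemma PsiF_run T (f : nat -> T -> T) r x : PsiF f r x = run f (iota 1 r.-1) x.
Proof.
elim: r x => [|r IH] x; first by [].
case: r IH => [|r] IH; first by [].
transitivity (f r.+1 (PsiF f r.+1 x)); first by [].
rewrite IH /run.
have -> : iota 1 r.+2.-1 = iota 1 r.+1.-1 ++ iota (1 + r) 1 by rewrite -iotaD addn1.
by rewrite foldl_cat add1n.
Qed.

Lemma PhiF_run T (f : nat -> T -> T) n x : PhiF f n x = run f (phil n) x.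
Proof.
elim: n x => [|n IH] x; first by [].
transitivity (PhiF f n (PsiF f n.+1 x)); first by [].
by rewrite IH PsiF_run /run foldl_cat.
Qed.

Lemma phil_bound n j : j \in phil n -> 1 <= j < n.
Proof.
elim: n => [|n IH] //=.
rewrite mem_cat mem_iota => /orP [h|h]; first lia.
by have := IH h; lia.
Qed.

Section Comp.
Variable k : nat.
Notation runS := (run (@shell_psi C k.+1)).
Notation runC := (run (@fold_psi C k.+1)).

Lemma CR L (z z' : sh C k.+1) : all (fun j => (1 <= j) && (j <= k.+1)) L ->
  shell_eq z z' -> shell_eq (runS L z) (runS L z').
Proof.
elim: L z z' => [|j L IH] z z' //= /andP [hj hL] e.
apply: IH => //; apply: P3 => //; lia.
Qed.

Lemma CC1 L (x : cell C k.+2) : all (fun j => (1 <= j) && (j <= k.+1)) L ->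
  shell_eq (runS L (bdry x)) (bdry (runC L x)).
Proof.
elim: L x => [|j L IH] x //= /andP [hj hL].
apply: seq_trans (IH _ hL).
by apply: CR => //; apply: P1.
Qed.

Lemma CC2 L (z : sh C k.+1) : all (fun j => (1 <= j) && (j <= k.+1)) L ->
  is_shell z -> is_shell (runS L z).
Proof.
elim: L z => [|j L IH] z //= /andP [hj hL] hz.
by apply: IH => //; apply: P2.
Qed.

Lemma CC4 L (x x' : cell C k.+2) : all (fun j => (1 <= j) && (j <= k.+1)) L ->
  shell_eq (bdry x) (bdry x') -> runC L x = runC L x' -> x = x'.
Proof.
elim: L x x' => [|j L IH] x x' //= /andP [hj hL] e ef.
apply: (P4 hj) => //.
apply: IH => //.
have h3 : shell_eq (shell_psi j (bdry x)) (shell_psi j (bdry x')).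
  by apply: P3 => //; lia.
apply: seq_trans (seq_sym (P1 x hj)) _.
exact: seq_trans h3 (P1 x' hj).
Qed.

Lemma CC5 L (z : sh C k.+1) (y : cell C k.+2) : all (fun j => (1 <= j) && (j <= k.+1)) L ->
  is_shell z -> shell_eq (runS L z) (bdry y) ->
  exists x, shell_eq (bdry x) z /\ runC L x = y.
Proof.
elim: L z y => [|j L IH] z y /=.
  by move=> _ _ e; exists y; split => //; apply: seq_sym.
move=> /andP [hj hL] hz e.
have [w [ew hw]] := IH _ _ hL (P2 hj hz) e.
have [x [ex hx]] := P5 hj hz (seq_sym ew).
by exists x; split => //; rewrite hx.
Qed.
End Comp.

End S.

Theorem theorem8p5 (C : cubcat) (m : nat) :
  (forall x : cell C m.+1,
      is_shell (bdry x) /\ shell_eq (shell_Phi (bdry x)) (bdry (Phi x))) /\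
  (forall (z : sh C m) (y : cell C m.+1),
      is_shell z ->
      (exists x0 : cell C m.+1, y = Phi x0) ->
      shell_eq (shell_Phi z) (bdry y) ->
      exists! x : cell C m.+1, shell_eq (bdry x) z /\ Phi x = y).
Proof.
case: m => [|k].
- split.
  + by move=> x; split => // i a _.
  + move=> z y hz _ e; exists y; split.
    * by split => // i a hi; rewrite -e.
    * by move=> x' [_ hx'].
- set L := phil k.+2.
  have hL : all (fun j => (1 <= j) && (j <= k.+1)) L.
    by apply/allP => j /phil_bound; lia.
  have ePhi : forall x : cell C k.+2, Phi x = run (@fold_psi C k.+1) L x.
    by move=> x; rewrite /Phi PhiF_run.
  have eS : forall z : sh C k.+1, shell_Phi z = run (@shell_psi C k.+1) L z.
    by move=> z; rewrite /shell_Phi PhiF_run.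
  split.
  + move=> x; split.
    * move=> p q a b hp hpq hq; rewrite /bdry; exact: ff.
    * rewrite eS ePhi; exact: CC1.
  + move=> z y hz _ e; rewrite eS in e.
    have [x [ex hx]] := CC5 hL hz e.
    exists x; split; first by rewrite ePhi.
    move=> x' [ex' hx'].
    apply: (CC4 hL); first exact: seq_trans ex (seq_sym ex').
    by rewrite hx -hx' ePhi.
Qed.
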